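(* Let $A$ be a partial ring and $a,b\in A$. If $D(b)\subseteq D(a)$, then there exists $k\in\mathbb{N}$ such that $b^k\in(a)$.
   Context: A partial ring is a set $A$ with $0$, a set $A_2\subseteq A\times A$ of summable pairs and a partial addition ($0$ a unit summable with everything; commutative; associative in the sense: $(a,b),(a+b,c)\in A_2$ iff $(b,c),(a,b+c)\in A_2$, and then $(a+b)+c=a+(b+c)$), with a commutative associative multiplication with unit $1$ such that $0\cdot a=0$ and $(a_1,a_2)\in A_2\Rightarrow(a_1x,a_2x)\in A_2$, $(a_1+a_2)x=a_1x+a_2x$. A tuple $(c_1,\dots,c_r)$ is summable if $c_1+\dots+c_r$ can be calculated in $A$. The ideal $(a)$ is $\{c_1a+\dots+c_ra: r\in\mathbb{N}, c_i\in A, (c_1a,\dots,c_ra)\text{ summable}\}$. A prime ideal is a subset $\mathfrak p\ne A$ containing $0$, closed under sums of summable pairs of its elements, with $A\mathfrak p\subseteq\mathfrak p$, and such that $xy\in\mathfrak p$ implies $x\in\mathfrak p$ or $y\in\mathfrak p$. $D(a)$ is the set of prime ideals $\mathfrak p$ with $a\notin\mathfrak p$. *)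

(* Defs.v *)
From Stdlib Require Import List.
Import ListNotations.
Set Implicit Arguments.

(* The partial addition is modelled as a total function
   [padd] together with the summability relation [summ] (the set A_2);
   the value of [padd x y] is only constrained when [summ x y] holds. *)
Record PartialRing := {
  carrier :> Type;
  pzero : carrier;
  pone : carrier;
  summ : carrier -> carrier -> Prop;
  padd : carrier -> carrier -> carrier;
  pmul : carrier -> carrier -> carrier;
  summ0 : forall a, summ pzero a;
  add0 : forall a, padd pzero a = a;
  summC : forall a b, summ a b -> summ b a;
  addC : forall a b, summ a b -> padd a b = padd b a;
  summA : forall a b c,
    (summ a b /\ summ (padd a b) c) <-> (summ b c /\ summ a (padd b c));
  addA : forall a b c, summ a b -> summ (padd a b) c ->
    padd (padd a b) c = padd a (padd b c);
  mulC : forall a b, pmul a b = pmul b a;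
  mulA : forall a b c, pmul (pmul a b) c = pmul a (pmul b c);
  mul1 : forall a, pmul pone a = a;
  mul0 : forall a, pmul pzero a = pzero;
  summ_mul : forall a1 a2 x, summ a1 a2 -> summ (pmul a1 x) (pmul a2 x);
  mulDl : forall a1 a2 x, summ a1 a2 ->
    pmul (padd a1 a2) x = padd (pmul a1 x) (pmul a2 x)
}.

Section Defs.
Variable A : PartialRing.

Fixpoint lsum (l : list A) : A :=
  match l with
  | [] => pzero A
  | x :: l' => padd A x (lsum l')
  end.

Fixpoint summable (l : list A) : Prop :=
  match l with
  | [] => True
  | x :: l' => summable l' /\ summ A x (lsum l')
  end.

Definition principal_ideal (a : A) : A -> Prop :=
  fun y => exists cs : list A,
    summable (map (fun c => pmul A c a) cs) /\
    y = lsum (map (fun c => pmul A c a) cs).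

Definition prime_ideal (p : A -> Prop) : Prop :=
  (exists x, ~ p x) /\
  p (pzero A) /\
  (forall x y, p x -> p y -> summ A x y -> p (padd A x y)) /\
  (forall c x, p x -> p (pmul A c x)) /\
  (forall x y, p (pmul A x y) -> p x \/ p y).

Definition Dset (a : A) : (A -> Prop) -> Prop :=
  fun p => prime_ideal p /\ ~ p a.

Fixpoint ppow (x : A) (k : nat) : A :=
  match k with
  | O => pone A
  | S k' => pmul A x (ppow x k')
  end.

End Defs.

(* Main.v *)
Require Import Defs.
From Stdlib Require Import List Classical.
Import ListNotations.

Section H.
Variable A : PartialRing.

Definition Ideal (X : A -> Prop) : Prop :=
  X (pzero A) /\ (forall x y, X x -> X y -> summ A x y -> X (padd A x y)) /\
  (forall c x, X x -> X (pmul A c x)).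

Definition J (Q : A -> Prop) : A -> Prop :=
  fun y => exists l : list A, summable A l /\ Forall Q l /\ y = lsum A l.

Lemma app_sum (l1 l2 : list A) : summable A l1 -> summable A l2 ->
  summ A (lsum A l1) (lsum A l2) ->
  summable A (l1 ++ l2) /\ lsum A (l1 ++ l2) = padd A (lsum A l1) (lsum A l2).
Proof.
  induction l1 as [|x l1 IH]; simpl; intros H1 H2 H3.
  - split; auto. rewrite add0; reflexivity.
  - destruct H1 as [H1 Hx].
    destruct (proj1 (summA A x (lsum A l1) (lsum A l2)) (conj Hx H3)) as [Ha Hb].
    destruct (IH H1 H2 Ha) as [S E].
    split. split; auto. rewrite E; auto.
    rewrite E. symmetry. apply addA; auto.
Qed.

Lemma mul_sum (l : list A) z : summable A l ->
  summable A (map (fun u => pmul A u z) l) /\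
  pmul A (lsum A l) z = lsum A (map (fun u => pmul A u z) l).
Proof.
  induction l as [|x l IH]; simpl; intros H.
  - split; auto. apply mul0.
  - destruct H as [H Hx]. destruct (IH H) as [S E].
    split. split; auto. rewrite <- E. apply summ_mul; auto.
    rewrite mulDl; auto. rewrite E; reflexivity.
Qed.

Lemma idealSum M (l : list A) : Ideal M -> summable A l -> Forall M l -> M (lsum A l).
Proof.
  intros [H0 [HD HM]]. induction l as [|x l IH]; simpl; intros Hs HF.
  - auto.
  - destruct Hs. inversion HF; subst. apply HD; auto.
Qed.

Lemma J_ideal Q : (forall c u, Q u -> Q (pmul A c u)) -> Ideal (J Q).
Proof.
  intros HQ. split; [|split].
  - exists []. simpl. auto.
  - intros x y [l1 [S1 [F1 E1]]] [l2 [S2 [F2 E2]]] Hs. subst.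
    destruct (app_sum l1 l2 S1 S2 Hs) as [S E].
    exists (l1 ++ l2). split; auto. split; auto. apply Forall_app; auto.
  - intros c x [l [S [F E]]]. subst.
    destruct (mul_sum l c S) as [S' E'].
    exists (map (fun u => pmul A u c) l). split; auto. split.
    + apply Forall_map. eapply Forall_impl; [|exact F]. intros u Hu.
      rewrite mulC. auto.
    + rewrite mulC. auto.
Qed.

Lemma J_in (Q : A -> Prop) u : Q u -> J Q u.
Proof.
  intros Hu. exists [u]. simpl. split. split; auto. apply summC, summ0.
  split; auto. rewrite addC. rewrite add0; auto. apply summC, summ0.
Qed.

Lemma ppow_add b m n : ppow A b (m + n) = pmul A (ppow A b m) (ppow A b n).
Proof.
  induction m; simpl. rewrite mul1; auto. rewrite IHm, mulA; auto.
Qed.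

Lemma J_principal a y : J (fun u => exists c, u = pmul A c a) y -> principal_ideal A a y.
Proof.
  intros [l [S [F E]]]. subst.
  assert (exists cs : list A, l = map (fun c => pmul A c a) cs) as [cs ->].
  { clear S. induction F as [|x l [c Hc] F IH]. exists []; auto.
    destruct IH as [cs0 Hcs]. exists (c :: cs0). simpl. subst. reflexivity. }
  exists cs; auto.
Qed.

Lemma prod_in M x y u v : Ideal M -> M (pmul A x y) ->
  J (fun w => M w \/ exists c, w = pmul A c x) u ->
  J (fun w => M w \/ exists c, w = pmul A c y) v -> M (pmul A u v).
Proof.
  intros HI Hxy [l1 [S1 [F1 E1]]] [l2 [S2 [F2 E2]]]. subst.
  destruct (mul_sum l1 (lsum A l2) S1) as [S E]. rewrite E.
  apply idealSum; auto. apply Forall_map.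
  eapply Forall_impl; [|exact F1]. intros w Hw. simpl.
  rewrite mulC. destruct (mul_sum l2 w S2) as [S' E']. rewrite E'.
  apply idealSum; auto. apply Forall_map.
  eapply Forall_impl; [|exact F2]. intros t Ht. simpl.
  destruct HI as [H0 [HD HM]].
  destruct Ht as [Ht|[d ->]]. rewrite mulC. apply HM; auto.
  destruct Hw as [Hw|[c ->]]. apply HM; auto.
  replace (pmul A (pmul A d y) (pmul A c x)) with (pmul A (pmul A d c) (pmul A x y)).
  apply HM; auto.
  rewrite !mulA. f_equal. rewrite (mulC A x y), <- !mulA. f_equal. apply mulC.
Qed.

End H.

From mathcomp Require Import ssreflect ssrfun ssrbool boolp classical_sets.

Theorem mainTheorem18 (A : PartialRing) (a b : A) :
  (forall p : A -> Prop, @Dset A b p -> @Dset A a p) ->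
  exists k : nat, @principal_ideal A a (@ppow A b k).
Proof.
intros HD. apply NNPP; intro Hno.
pose PP := fun X : A -> Prop => X = set0 \/
  (Ideal A X /\ X a /\ forall k, ~ X (ppow A b k)).
assert (inF : forall X t, PP X -> X t ->
   Ideal A X /\ X a /\ forall k, ~ X (ppow A b k)).
{ intros X t [E|H] Xt; [|exact H]. subst X. destruct Xt. }
destruct (@Zorn_bigcup A PP) as [M [PM Mmax]].
{ intros F FP Ftot.
  destruct (Classical_Prop.classic (exists X, F X /\ exists x, X x)) as [[X0 [FX0 [x0 Hx0]]] | Hne].
  - right. destruct (inF X0 x0 (FP _ FX0) Hx0) as [[I0 [ID IM]] [Ia Id]].
    split; [split; [|split]|split].
    + exists X0; auto.
    + intros x y [X1 F1 H1] [X2 F2 H2] Hs.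
      destruct (Ftot X1 X2 F1 F2) as [S|S].
      * destruct (inF X2 y (FP _ F2) H2) as [[_ [D2 _]] _].
        exists X2; auto.
      * destruct (inF X1 x (FP _ F1) H1) as [[_ [D1 _]] _].
        exists X1; auto.
    + intros c x [X1 F1 H1].
      destruct (inF X1 x (FP _ F1) H1) as [[_ [_ M1]] _].
      exists X1; auto.
    + exists X0; auto.
    + intros k [X1 F1 H1].
      destruct (inF X1 _ (FP _ F1) H1) as [_ [_ D1]]. exact (D1 k H1).
  - left. apply: funext => t. apply: propext. split; [|intros []].
    intros [X FX Xt]. apply Hne. exists X; split; auto. exists t; auto. }
pose Ja := J A (fun u => exists c, u = pmul A c a).
assert (IJa : Ideal A Ja).
{ apply J_ideal. intros c u [d ->]. exists (pmul A c d). rewrite mulA; auto. }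
assert (Jaa : Ja a).
{ apply J_in. exists (pone A). rewrite mul1; auto. }
assert (Jad : forall k, ~ Ja (ppow A b k)).
{ intros k Hk. apply Hno. exists k. apply J_principal. exact Hk. }
destruct PM as [M0 | [HI [Ma Mdis]]].
- subst M. apply (Mmax Ja).
  + split. intros t []. intros S. destruct (S _ (proj1 IJa)).
  + right. auto.
- assert (key : forall z, ~ M z -> exists m,
     J A (fun w => M w \/ exists c, w = pmul A c z) (ppow A b m)).
  { intros z Hz. apply NNPP; intro Hn.
    apply (Mmax (J A (fun w => M w \/ exists c, w = pmul A c z))).
    - split.
      + intros t Ht. apply J_in. left; auto.
      + intros S. apply Hz. apply S. apply J_in. right. exists (pone A).
        rewrite mul1; auto.
    - right. split; [|split].
      + apply J_ideal. intros c u [Hu|[d ->]].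
        * left. apply (proj2 (proj2 HI)); auto.
        * right. exists (pmul A c d). rewrite mulA; auto.
      + apply J_in. left; auto.
      + intros k Hk. apply Hn. exists k; auto. }
  destruct HI as [H0 [HDs HM]].
  assert (Hp : Dset A b M).
  { split.
    - split; [|split; [|split; [|split]]].
      + exists (pone A). intros H1. apply (Mdis 0%nat). exact H1.
      + exact H0.
      + exact HDs.
      + exact HM.
      + intros x y Hxy. apply NNPP; intro Hn.
        apply not_or_and in Hn. destruct Hn as [Hx Hy].
        destruct (key x Hx) as [m Hm]. destruct (key y Hy) as [n Hn].
        apply (Mdis (m + n)%nat). rewrite ppow_add.
        apply (prod_in A M x y); auto.
        split; auto.
    - intros Hb. apply (Mdis 1%nat). simpl. rewrite mulC mul1. exact Hb. }
  destruct (HD M Hp) as [_ Ha]. exact (Ha Ma).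
Qed.
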